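(* Let $r,h\ge 2$ and $g,m$ be positive integers with $g+h<gr$, put $n=rg$, and let $q$ be a prime power with $q^m\ge \frac{mn}{r}$. If (i) $m\ge r$, or (ii) $m<r$ and there exists a $q$-ary $[r,r-m,\ge h+2]$ linear code, then there exists an MR $(n,r,h,1)$-LRC over a field of size $\ell=q^{\min\{hm,\frac{nm}{r}\}}$.
   Context: Definition: let $\ell$ be a prime power, $a,g,r,h$ positive integers with $ga+h<gr$, $n=gr$, $k=n-ga-h$. An MR (maximally recoverable) $(n,r,h,a)_\ell$-LRC is an $[n,k]$ linear code over $\mathbb{F}_\ell$ with a parity-check matrix $H\in\mathbb{F}_\ell^{(n-k)\times n}$ of the block form whose first $ga$ rows are block diagonal with diagonal blocks $A_1,\dots,A_g$ (each of size $a\times r$, the coordinates split into $g$ consecutive groups of size $r$) and whose last $h$ rows are $(D_1|\cdots|D_g)$ with each $D_i$ of size $h\times r$, such that (i) each $A_i$ generates an $[r,a,r-a+1]_\ell$ MDS code, and (ii) every set of $ag+h$ columns of $H$ consisting of any $a$ columns from each group together with any $h$ further columns is linearly independent over $\mathbb{F}_\ell$. ''An MR $(n,r,h,a)$-LRC over a field of size $\ell$'' means an MR $(n,r,h,a)_\ell$-LRC. *)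

(* Defs.v *)
From HB Require Import structures.
From mathcomp Require Import all_boot all_order all_algebra all_field.
Set Implicit Arguments. Unset Strict Implicit. Unset Printing Implicit Defensive.
Import GRing.Theory.
Local Open Scope ring_scope.

Definition wt (F : fieldType) (n : nat) (v : 'rV[F]_n) : nat :=
  #|[set j : 'I_n | v 0 j != 0]|.

Definition min_dist_ge (F : fieldType) (m n : nat) (C : 'M[F]_(m, n)) (d : nat) : Prop :=
  forall v : 'rV[F]_n, (v <= C)%MS -> v != 0 -> (d <= wt v)%N.

Definition has_min_dist (F : fieldType) (m n : nat) (C : 'M[F]_(m, n)) (d : nat) : Prop :=
  min_dist_ge C d /\ exists2 v : 'rV[F]_n, (v <= C)%MS & v != 0 /\ wt v = d.

Definition gen_code (F : fieldType) (m n : nat) (C : 'M[F]_(m, n)) (k d : nat) : Prop :=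
  \rank C = k /\ has_min_dist C d.

(* The block parity-check matrix
     H = [ diag(A_1,...,A_g) ; (D_1 | ... | D_g) ]
   columns are indexed by 'I_(\sum_(i<g) r), i.e. g consecutive groups of size r;
   the group of a column t is tagnat.sig1 t. *)
Definition LRC_H (F : fieldType) (g r a h : nat)
  (A : 'I_g -> 'M[F]_(a, r)) (D : 'I_g -> 'M[F]_(h, r))
  : 'M[F]_((\sum_(i < g) a)%N + h, \sum_(i < g) r) :=
  col_mx (@mxblock F g g (fun _ => a) (fun _ => r)
                   (fun i j => if i == j then A i else 0))
         (@mxrow F g (fun _ => r) h D).

(* The code with parity-check matrix LRC_H A D is an MR (n,r,h,a)-LRC, n = g*r. *)
Definition is_MR_LRC (F : fieldType) (g r h a : nat)
  (A : 'I_g -> 'M[F]_(a, r)) (D : 'I_g -> 'M[F]_(h, r)) : Prop :=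
  [/\ (0 < a)%N /\ (0 < g)%N /\ (0 < r)%N /\ (0 < h)%N, (g * a + h < g * r)%N,
   (forall i : 'I_g, gen_code (A i) a (r - a + 1)) &
   (* (ii) any a columns from each group together with any h further columns
      (i.e. any set S of g*a+h columns meeting every group in >= a columns)
      are linearly independent *)
   (forall S : {set 'I_(\sum_(i < g) r)},
       #|S| = (g * a + h)%N ->
       (forall i : 'I_g, (a <= #|[set t in S | tagnat.sig1 t == i]|)%N) ->
       \rank (colsub (fun k : 'I_#|S| => enum_val k) (LRC_H A D)) = #|S|)].

Definition exists_MR_LRC (l n r h a : nat) : Prop :=
  exists F : finFieldType, #|F| = l /\
    exists g : nat, n = (g * r)%N /\
    exists (A : 'I_g -> 'M[F]_(a, r)) (D : 'I_g -> 'M[F]_(h, r)),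
      is_MR_LRC A D.

Definition prime_power (q : nat) : Prop :=
  exists p k : nat, [/\ prime p, (0 < k)%N & q = (p ^ k)%N].

(* Main.v *)
Require Import Defs.
From HB Require Import structures.
From mathcomp Require Import all_boot all_order all_algebra all_field.
Set Implicit Arguments. Unset Strict Implicit. Unset Printing Implicit Defensive.
Import GRing.Theory.
Local Open Scope ring_scope.

From mathcomp Require Import zify.
Lemma ext_exists (K : finFieldType) (d : nat) :
  (0 < d)%N -> {L : fieldExtType K | \dim {:L} = d}.
Proof.
move=> d_gt0.
have [p pr_p pcharKp] := finPcharP K.
have Kcard : #|K| = (p ^ logn p #|K|)%N := card_pprimeChar pcharKp.
set k := logn p #|K| in Kcard.
have q_gt1 : (1 < #|K|)%N := finNzRing_gt1 K.
set m := (#|K| ^ d)%N.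
have m_gt1: (m > 1)%N by rewrite /m (ltn_exp2l 0).
have m_gt0 := ltnW m_gt1; have m1_gt0: (m.-1 > 0)%N by rewrite -ltnS prednK.
pose q (R : nzRingType) := ('X^m - 'X : {poly R}); have Dq R: q R = ('X^(m.-1) - 1) * ('X - 0).
  by rewrite subr0 mulrBl mul1r -exprSr prednK.
have /FinSplittingFieldFor[/= L splitLq]: q K != 0.
  by rewrite Dq monic_neq0 ?rpredM ?monicXsubC ?monicXnsubC.
rewrite rmorphB rmorphXn /= map_polyX -/(q L) in splitLq.
have pcharL: p \in [pchar L] by rewrite pchar_lalg.
pose Fm := FinFieldExtType L; exists L.
have /finField_galois_generator[/= a _ Da]: (1 <= {:L})%VS by apply: sub1v.
pose Em := fixedSpace (a ^+ d)%g; rewrite dimv1 expn1 in Da.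
have{splitLq} [zs DqL defL] := splitLq.
have Uzs: uniq zs.
  rewrite -separable_prod_XsubC -(eqp_separable DqL) Dq separable_root andbC.
  rewrite /root !hornerE subr_eq0 eq_sym expr0n gtn_eqF ?oner_eq0 //=.
  rewrite cyclotomic.separable_Xn_sub_1 // -subn1 natrB // subr_eq0.
  have k_gt0 : (0 < k)%N.
    by rewrite lt0n; apply/eqP => k0; move: q_gt1; rewrite Kcard k0.
  by rewrite /m Kcard -expnM natrX pcharf0 // expr0n muln_eq0 (negPf (lt0n_neq0 k_gt0)) (negPf (lt0n_neq0 d_gt0)) /= eq_sym oner_eq0.
have cardL : #|Fm| = m.
  suffices /eq_card->: Fm =i zs.
    apply: succn_inj; rewrite (card_uniqP _) //= -(size_prod_XsubC _ id).
    by rewrite -(eqp_size DqL) size_polyDl size_polyXn // size_polyN size_polyX.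
  have in_zs: zs =i Em.
    move=> z; rewrite -root_prod_XsubC -(eqp_root DqL) (sameP fixedSpaceP eqP).
    rewrite /root !hornerE subr_eq0 /= /m; congr (_ == z).
    elim: (d) => [|i IHi]; first by rewrite gal_id.
    by rewrite expgSr expnSr exprM IHi galM ?Da ?memvf.
  suffices defEm: Em = {:L}%VS by move=> z; rewrite in_zs defEm memvf.
  apply/eqP; rewrite eqEsubv subvf -defL -[Em]subfield_closed agenvS //.
  by rewrite subv_add sub1v; apply/span_subvP=> z; rewrite in_zs.
have := card_vspace (fullv : {vspace (finvect_type L)}).
rewrite card_vspacef cardL /m => /eqP; rewrite eqn_exp2l // => /eqP ->.
by [].
Qed.
Lemma card_ext (K : finFieldType) (L : fieldExtType K) :
  #|FinFieldExtType L| = (#|K| ^ \dim {:L})%N.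
Proof.
by rewrite -(card_vspace (fullv : {vspace (finvect_type L)})) card_vspacef.
Qed.
Section MR.
Variables (F : fieldType) (K : finFieldType) (kap : {rmorphism K -> F}).
Variables (g r h : nat).
Local Notation N := (\sum_(i < g) r)%N.
Local Notation q := #|K|.
Variable beta : 'I_N -> F.
Hypothesis frobD : forall x y : F, (x + y) ^+ q = x ^+ q + y ^+ q.

Lemma frobnD t (x y : F) : (x + y) ^+ (q ^ t) = x ^+ (q ^ t) + y ^+ (q ^ t).
Proof. by elim: t => [|t IH]; rewrite ?expn0 ?expr1 // expnSr !exprM IH frobD. Qed.

Lemma frobnK t (a : K) : kap a ^+ (q ^ t) = kap a.
Proof.
by elim: t => [|t IH]; rewrite ?expn0 ?expr1 // expnSr exprM IH -rmorphXn expf_card.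
Qed.

Definition Amat : 'I_g -> 'M[F]_(1, r) := fun _ => const_mx 1.
Definition Dmat : 'I_g -> 'M[F]_(h, r) :=
  fun i => \matrix_(t < h, j < r) beta (@tagnat.Rank g (fun _ => r) i j) ^+ (q ^ t).


Lemma sig1_inj1 (x y : 'I_(\sum_(i<g) 1)) : tagnat.sig1 x = tagnat.sig1 y -> x = y.
Proof.
have E z : z = @tagnat.Rank g (fun _ => 1%N) (tagnat.sig1 z) ord0.
  rewrite -{1}(tagnat.sig2K z); congr tagnat.Rank; apply/val_inj => /=.
  by case: (tagnat.sig2 z) => [[]].
by move=> e; rewrite (E x) (E y) e.
Qed.

Lemma colsub_entry0 (m n p : nat) (f : 'I_p -> 'I_n) (H : 'M[F]_(m, n)) (u : 'rV_m) :
  u *m colsub f H = 0 -> forall k, (u *m H) 0 (f k) = 0.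
Proof.
move=> e k; have := congr1 (fun A : 'M[F]_(1, p) => A 0 k) e; rewrite [RHS]mxE => <-.
by rewrite !mxE; apply: eq_bigr => j _; rewrite mxE.
Qed.

Lemma MR_rank (S : {set 'I_N}) :
  (1 < q)%N -> (0 < h)%N -> #|S| = (g * 1 + h)%N ->
  (forall i : 'I_g, (1 <= #|[set t in S | tagnat.sig1 t == i]|)%N) ->
  (forall y : 'I_N -> K, (forall t, t \notin S -> y t = 0) ->
     (forall i : 'I_g, \sum_(t | tagnat.sig1 t == i) y t = 0) ->
     \sum_t kap (y t) * beta t = 0 -> forall t, y t = 0) ->
  \rank (colsub (fun k : 'I_#|S| => enum_val k) (LRC_H Amat Dmat)) = #|S|.
Proof.
move=> q_gt1 h_gt0 cardS grpS KL.
set M := colsub _ _.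
have nR : ((\sum_(i<g) 1) + h = #|S|)%N.
  by rewrite cardS muln1 big_const_ord iter_addn_0 mul1n.
suff: row_free M by move/eqP => ->; exact nR.
rewrite -kermx_eq0; case: (eqVneq (kermx M) 0) => // /matrix0Pn [i0 [j0 nz]].
set u := row i0 (kermx M).
have uM : u *m M = 0 by apply/sub_kermxP; exact: row_sub.
suff u0 : u = 0.
  have e : u 0 j0 = kermx M i0 j0 by rewrite mxE.
  by move: nz; rewrite -e u0 mxE eqxx.
clearbody u; clear i0 j0 nz.
set lam := lsubmx u; set c := rsubmx u.
pose Lam (i : 'I_g) := \sum_rho lam 0 rho * (tagnat.sig1 rho == i)%:R.
pose ev (x : F) := \sum_(t < h) c 0 t * x ^+ (q ^ t).
have Key : forall col, col \in S -> Lam (tagnat.sig1 col) + ev (beta col) = 0.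
  have uH := colsub_entry0 uM.
  move=> col colS.
  have := uH (enum_rank_in colS col); rewrite (enum_rankK_in colS colS) => e.
  apply: etrans e.
  rewrite -[u](hsubmxK u) /LRC_H mul_row_col mxE -/lam -/c.
  congr (_ + _).
    rewrite mxE; apply: eq_bigr => rho _; rewrite mxE.
    by rewrite /mxblock mxE; case: (tagnat.sig1 rho == tagnat.sig1 col); rewrite /Amat mxE.
  by rewrite mxE; apply: eq_bigr => t _; rewrite /mxrow !mxE tagnat.sig2K.
have ev0 : ev 0 = 0.
  by rewrite /ev big1 // => t _; rewrite expr0n expn_eq0 eqn0Ngt (ltnW q_gt1) /= mulr0.
have evD : {morph ev : x y / x + y}.
  by move=> x y; rewrite /ev -big_split; apply: eq_bigr => t _; rewrite frobnD mulrDr.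
have evZ : forall a x, ev (kap a * x) = kap a * ev x.
  move=> a x; rewrite /ev mulr_sumr; apply: eq_bigr => t _.
  by rewrite exprMn frobnK mulrCA.
have [piv pivP] : exists piv : 'I_g -> 'I_N, forall i, piv i \in S /\ tagnat.sig1 (piv i) = i.
  apply: (@fin_all_exists _ (fun _ => 'I_N) (fun i t => t \in S /\ tagnat.sig1 t = i)) => i; have := grpS i; rewrite card_gt0 => /set0Pn [t].
  by rewrite inE => /andP [tS /eqP e]; exists t.
have c0 : c = 0.
  case: (eqVneq c 0) => // cnz; exfalso.
  pose B := [set piv i | i : 'I_g].
  pose T := S :\: B.
  have pivinj : injective piv.
    by move=> i j e; rewrite -(proj2 (pivP i)) -(proj2 (pivP j)) e.
  have BS : B \subset S by apply/subsetP => t /imsetP [i _ ->]; exact: (proj1 (pivP i)).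
  have cardT : #|T| = h.
    by rewrite cardsD (setIidPr BS) card_imset // card_ord cardS muln1 addKn.
  pose sT := {t : 'I_N | t \in T}.
  pose lam' (l : {ffun sT -> K}) (t : 'I_N) : K :=
    if (insub t : option sT) is Some st then l st else 0.
  pose yv l t := lam' l t - (t == piv (tagnat.sig1 t))%:R *
      \sum_(t' | tagnat.sig1 t' == tagnat.sig1 t) lam' l t'.
  have lamT : forall l t, t \notin T -> lam' l t = 0.
    by move=> l t tT; rewrite /lam' insubN.
  have lamV : forall l (st : sT), lam' l (val st) = l st.
    by move=> l st; rewrite /lam' valK.
  have pivT : forall i, piv i \notin T.
    by move=> i; rewrite inE negb_and negbK; apply/orP; left; apply: imset_f.
  have yS : forall l t, t \notin S -> yv l t = 0.
    move=> l t tS; rewrite /yv lamT; last by rewrite inE (negPf tS) andbF.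
    have -> : (t == piv (tagnat.sig1 t)) = false.
      by apply/negP => /eqP e; move: tS; rewrite e (proj1 (pivP _)).
    by rewrite mul0r subr0.
  have ygrp : forall l i, \sum_(t | tagnat.sig1 t == i) yv l t = 0.
    move=> l i; rewrite /yv sumrB.
    set G := \sum_(t | tagnat.sig1 t == i) lam' l t.
    rewrite [X in _ - X](eq_bigr (fun t => (t == piv i)%:R * G)); last by move=> t /eqP ->.
    rewrite -mulr_suml (bigD1 (piv i)) /=; last by rewrite (proj2 (pivP i)).
    rewrite eqxx big1 ?addr0 ?mul1r ?subrr // => t /andP [_ ne].
    by rewrite (negPf ne).
  have yT : forall l (st : sT), yv l (val st) = l st.
    move=> l st; rewrite /yv lamV.
    have -> : (val st == piv (tagnat.sig1 (val st))) = false.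
      by apply/negP => /eqP e; have := valP st; rewrite e (negPf (pivT _)).
    by rewrite mul0r subr0.
  pose Phi l := \sum_t kap (yv l t) * beta t.
  have root_Phi : forall l, ev (Phi l) = 0.
    move=> l; rewrite /Phi (big_morph ev evD ev0).
    rewrite (eq_bigr (fun t => - (kap (yv l t) * Lam (tagnat.sig1 t)))); last first.
      move=> t _; rewrite evZ; case: (boolP (t \in S)) => tS.
        by rewrite -mulrN; congr (_ * _); apply/eqP; rewrite -addr_eq0 addrC Key.
      by rewrite yS // rmorph0 !mul0r oppr0.
    rewrite sumrN (partition_big (fun t => tagnat.sig1 t) predT) //= big1 ?oppr0 // => i _.
    rewrite (eq_bigr (fun t => kap (yv l t) * Lam i)); last by move=> t /= /eqP ->.
    by rewrite -mulr_suml -rmorph_sum (eq_bigl (fun t => tagnat.sig1 t == i)) // ygrp rmorph0 mul0r.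
  have Phi_inj : injective Phi.
    move=> l1 l2 e; apply/ffunP => st; rewrite -!yT.
    apply/eqP; rewrite -subr_eq0; apply/eqP.
    apply: (KL (fun t => yv l1 t - yv l2 t)) => [t tS| i |].
    - by rewrite !yS // subr0.
    - by rewrite sumrB !ygrp subr0.
    transitivity (Phi l1 - Phi l2); last by rewrite e subrr.
    by rewrite /Phi -sumrB; apply: eq_bigr => t _; rewrite rmorphB mulrBl.
  pose P := \sum_(t < h) c 0 t *: 'X^(q ^ t) : {poly F}.
  have Pev : forall x, P.[x] = ev x.
    by move=> x; rewrite horner_sum; apply: eq_bigr => t _; rewrite hornerZ hornerXn.
  have Pnz : P != 0.
    have /matrix0Pn [i [t0 ct0]] := cnz; rewrite (ord1 i) in ct0.
    have : P`_(q ^ t0) = c 0 t0.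
      rewrite coef_sum (bigD1 t0) //= coefZ coefXn eqxx mulr1 big1 ?addr0 // => t ne.
      have ne' : (t : nat) != t0 := ne.
      by rewrite coefZ coefXn eqn_exp2l // eq_sym (negPf ne') mulr0.
    by move=> e; apply/eqP => P0; move: ct0; rewrite -e P0 coef0 eqxx.
  have Psize : (size P <= (q ^ h.-1).+1)%N.
    apply: leq_trans (size_sum _ _ _) _; apply/bigmax_leqP => t _.
    apply: leq_trans (size_scale_leq _ _) _; rewrite size_polyXn ltnS leq_exp2l //.
    by rewrite -ltnS prednK.
  have := max_poly_roots Pnz (_ : all (root P) (map Phi (enum {ffun sT -> K}))) _.
  rewrite size_map -cardE card_ffun card_sig.
  have -> : #|[pred x in T]| = h by rewrite -cardT; apply: eq_card.
  have Hall : all (root P) [seq Phi i | i <- enum {ffun sT -> K}].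
    by apply/allP => x /mapP [l _ ->]; rewrite /root Pev root_Phi.
  have Huniq : uniq [seq Phi i | i <- enum {ffun sT -> K}].
    by rewrite map_inj_uniq ?enum_uniq.
  move=> /(_ Hall Huniq) /leq_trans /(_ Psize); rewrite ltnS leqNgt ltn_exp2l //.
  by rewrite prednK ?leqnn.
have Lam0 : forall i, Lam i = 0.
  move=> i; have := Key _ (proj1 (pivP i)); rewrite (proj2 (pivP i)).
  by rewrite /ev c0 big1 ?addr0 // => t _; rewrite mxE mul0r.
have lam0 : lam = 0.
  apply/rowP => rho; have e : Lam (tagnat.sig1 rho) = lam 0 rho.
    rewrite /Lam (bigD1 rho) //= [X in _ + X]big1.
      by rewrite eqxx; exact: (etrans (addr0 _) (mulr1 _)).
    move=> rho' ne.
    have [e|] := eqVneq (tagnat.sig1 rho') (tagnat.sig1 rho); last by rewrite mulr0.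
    by rewrite (sig1_inj1 e) eqxx in ne.
  by rewrite -e Lam0 mxE.
by rewrite -(hsubmxK u) -/lam -/c lam0 c0 row_mx0.
Qed.

End MR.
Lemma grp_count g r h (S : {set 'I_(\sum_(i<g) r)}) :
  #|S| = (g * 1 + h)%N ->
  (forall i : 'I_g, (1 <= #|[set t in S | tagnat.sig1 t == i]|)%N) ->
  (forall i : 'I_g, (#|[set t in S | tagnat.sig1 t == i]| <= h.+1)%N) /\
  (forall I : {set 'I_g}, (forall i, i \in I -> 2 <= #|[set t in S | tagnat.sig1 t == i]|)%N ->
      (#|I| <= h)%N).
Proof.
move=> cardS grp.
set cnt := fun i => #|[set t in S | tagnat.sig1 t == i]|.
have sumS : (\sum_i cnt i = #|S|)%N.
  rewrite -sum1_card (partition_big (fun t => tagnat.sig1 t) predT) //=.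
  apply: eq_bigr => i _; rewrite sum1dep_card; apply: eq_card => t; by rewrite !inE.
split.
  move=> i0; have := sumS; rewrite (bigD1 i0) //= cardS => e.
  have : (g.-1 <= \sum_(i | i != i0) cnt i)%N.
    apply: leq_trans (_ : \sum_(i | i != i0) 1 <= _)%N; last by apply: leq_sum => i _; exact: grp.
    rewrite sum1dep_card; have -> : #|[set i | i != i0]| = #|predC1 i0|.
      by apply: eq_card => i; rewrite !inE.
    by rewrite cardC1 card_ord.
  have g_gt0 : (0 < g)%N := leq_ltn_trans (leq0n i0) (ltn_ord i0).
  move=> H; have : (cnt i0 + g.-1 <= g * 1 + h)%N by rewrite -e leq_add2l.
  move=> H2; have : (cnt i0 <= h.+1)%N by lia.
  by [].
move=> I HI.
have : (\sum_i (1 + (i \in I)) <= \sum_i cnt i)%N.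
  apply: leq_sum => i _; case: (boolP (i \in I)) => iI; [exact: HI | exact: grp].
rewrite big_split /= sumS cardS.
have -> : (\sum_(i < g) 1 = g)%N by rewrite -[g in RHS]card_ord -sum1_card.
have -> : (\sum_(i < g) (i \in I) = #|I|)%N.
  by rewrite -sum1_card [RHS]big_mkcond; apply: eq_bigr => i _; case: (i \in I).
by rewrite muln1 leq_add2l.
Qed.

Lemma Rank_inj g r (i0 : 'I_g) : injective (@tagnat.Rank g (fun _ => r) i0).
Proof.
move=> j j' e; apply/val_inj/eqP; move: (@tagnat.eq_Rank g (fun _ => r) i0 i0 j j').
by rewrite e !eqxx /= => <-.
Qed.

Lemma sum_grp (V : nmodType) g r (i0 : 'I_g) (f : 'I_(\sum_(i<g) r) -> V) :
  \sum_(t | tagnat.sig1 t == i0) f t = \sum_(j < r) f (@tagnat.Rank g (fun _ => r) i0 j).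
Proof.
rewrite -(big_imset _ (in2W (@Rank_inj g r i0))) /=.
apply: eq_bigl => t; apply/eqP/imsetP => [e | [j _ ->]].
  by exists (tagnat.sig2 t) => //; rewrite -e tagnat.sig2K.
by rewrite tagnat.Rank1K.
Qed.

Section KL.
Variables (K : finFieldType) (E : fieldType) (iota : {rmorphism K -> E}) (L : fieldExtType E).
Variables (g r h s : nat) (X : s.-tuple L) (u : 'I_r -> E) (gam : 'I_g -> E).
Hypotheses (freeX : free X) (gam_inj : injective gam) (hs : (minn h g <= s)%N).
Hypothesis Pu : forall y : 'rV[K]_r, (wt y <= h.+1)%N -> \sum_j iota (y 0 j) * u j = 0 -> y = 0.
Local Notation N := (\sum_(i < g) r)%N.

Definition betaC (t : 'I_N) : L :=
  \sum_(a < s) (u (tagnat.sig2 t) * gam (tagnat.sig1 t) ^+ a) *: X`_a.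

Lemma KLC (S : {set 'I_N}) : #|S| = (g * 1 + h)%N ->
  (forall i : 'I_g, (1 <= #|[set t in S | tagnat.sig1 t == i]|)%N) ->
  forall y : 'I_N -> K, (forall t, t \notin S -> y t = 0) ->
     (forall i : 'I_g, \sum_(t | tagnat.sig1 t == i) y t = 0) ->
     \sum_t (in_alg L \o iota) (y t) * betaC t = 0 -> forall t, y t = 0.
Proof.
move=> cardS grp y yS ysum yb.
have [cntle cntI] := grp_count cardS grp.
pose W i := \sum_(t | tagnat.sig1 t == i) iota (y t) * u (tagnat.sig2 t).
have Wa : forall a : 'I_s, \sum_i W i * gam i ^+ a = 0.
  have : \sum_(a < s) (\sum_t iota (y t) * (u (tagnat.sig2 t) * gam (tagnat.sig1 t) ^+ a)) *: X`_a = 0.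
    apply: (etrans _ yb); rewrite /betaC; under [RHS]eq_bigr => t _ do rewrite mulr_sumr.
    rewrite [RHS]exchange_big; apply: eq_bigr => a _; rewrite scaler_suml; apply: eq_bigr => t _.
    by rewrite /= mulr_algl scalerA.
  move/freeP: freeX => H /H {}H a; apply: (etrans _ (H a)) => /=.
  rewrite [RHS](partition_big (fun t => tagnat.sig1 t) predT) //=; apply: eq_bigr => i _.
  rewrite /W mulr_suml; apply: eq_bigr => t /eqP <-; by rewrite mulrA.
have WQ : forall Q : {poly E}, (size Q <= s)%N -> \sum_i W i * Q.[gam i] = 0.
  move=> Q sQ; rewrite (eq_bigr (fun i => \sum_(a < s) W i * (Q`_a * gam i ^+ a))); last first.
    by move=> i _; rewrite (horner_coef_wide _ sQ) mulr_sumr.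
  rewrite exchange_big /= big1 // => a _.
  transitivity (Q`_a * \sum_i W i * gam i ^+ a); last by rewrite Wa mulr0.
  by rewrite mulr_sumr; apply: eq_bigr => i _; rewrite mulrCA.
pose I := [set i | [exists t, (tagnat.sig1 t == i) && (y t != 0)]].
have inS : forall t, y t != 0 -> t \in S.
  by move=> t yt; apply: contraTT yt => /yS ->; rewrite eqxx.
have I2 : forall i, i \in I -> (2 <= #|[set t in S | tagnat.sig1 t == i]|)%N.
  move=> i; rewrite inE => /existsP [t /andP [ti yt]].
  have [t' /and3P [t'i t't yt']] : exists t', [&& tagnat.sig1 t' == i, t' != t & y t' != 0].
    case: (boolP [exists t', [&& tagnat.sig1 t' == i, t' != t & y t' != 0]]) => [/existsP //|].
    rewrite negb_exists => /forallP Hn; have := ysum i; rewrite (bigD1 t) //= big1 ?addr0.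
      by move=> e; rewrite e eqxx in yt.
    move=> t' /andP [t'i t't]; have := Hn t'; rewrite t'i t't /= negbK.
    by move/eqP.
  have <- : #|[set t; t']| = 2%N by rewrite cards2 eq_sym t't.
  apply: subset_leq_card; apply/subsetP => z; rewrite !inE => /orP [] /eqP ->.
    by rewrite inS.
  by rewrite inS.
have Ih : (#|I| <= s)%N.
  apply: leq_trans hs; rewrite leq_min (cntI I I2) /=.
  by rewrite -[X in (_ <= X)%N]card_ord max_card.
have Wz : forall i0, i0 \in I -> W i0 = 0.
  move=> i0 i0I.
  pose Q := \prod_(z <- [seq gam i | i <- enum (I :\ i0)]) ('X - z%:P).
  have sQ : (size Q <= s)%N.
    by move: Ih; rewrite (cardsD1 i0 I) i0I add1n size_prod_XsubC size_map -cardE.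
  have := WQ Q sQ; rewrite (bigD1 i0) //= big1 ?addr0.
    move/eqP; rewrite mulf_eq0 => /orP [/eqP //|].
    rewrite -[Q.[gam i0] == 0]/(root Q (gam i0)) root_prod_XsubC (mem_map gam_inj).
    by rewrite mem_enum !inE eqxx.
  move=> i ne; case: (boolP (i \in I)) => iI.
    have : root Q (gam i) by rewrite root_prod_XsubC map_f // mem_enum in_setD1 ne iI.
    by move/eqP ->; rewrite mulr0.
  rewrite /W big1 ?mul0r // => t ti.
  have -> : y t = 0.
    apply/eqP; apply: contraNT iI => yt; rewrite inE; apply/existsP; exists t.
    by rewrite ti yt.
  by rewrite rmorph0 mul0r.
have yI : forall i0, i0 \notin I.
  move=> i0; apply/negP => i0I.
  have := Wz i0 i0I.
  pose y' := \row_(j < r) y (@tagnat.Rank g (fun _ => r) i0 j).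
  have Weq : W i0 = \sum_j iota (y' 0 j) * u j.
    rewrite /W sum_grp; apply: eq_bigr => j _; rewrite mxE; congr (_ * u _).
    by apply/val_inj; rewrite tagnat.Rank2K.
  have wty : (wt y' <= h.+1)%N.
    apply: leq_trans (cntle i0); rewrite /wt.
    rewrite -(card_imset _ (@Rank_inj g r i0)); apply: subset_leq_card.
    apply/subsetP => z /imsetP [j]; rewrite !inE mxE => yj ->.
    by rewrite inS //= tagnat.Rank1K eqxx.
  rewrite Weq => /(Pu wty) y0.
  move: i0I; rewrite inE => /existsP [t /andP [/eqP ti yt]].
  have : y' 0 (tagnat.sig2 t) = 0 by rewrite y0 mxE.
  rewrite mxE.
  have -> : @tagnat.Rank g (fun _ => r) i0 (tagnat.sig2 t) = t.
    by rewrite -ti tagnat.sig2K.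
  by move=> e; rewrite e eqxx in yt.
move=> t; apply/eqP; apply: contraNT (yI (tagnat.sig1 t)) => yt; rewrite inE.
by apply/existsP; exists t; rewrite eqxx yt.
Qed.
End KL.

Lemma gen_code_ones (F : fieldType) r : (0 < r)%N ->
  gen_code (const_mx 1 : 'M[F]_(1, r)) 1 (r - 1 + 1).
Proof.
move=> r0; rewrite subnK //.
have nz : (const_mx 1 : 'M[F]_(1, r)) != 0.
  by apply/matrix0Pn; exists 0, (Ordinal r0); rewrite mxE oner_eq0.
have wt1 : forall a : F, a != 0 -> wt (a *: (const_mx 1 : 'M[F]_(1, r))) = r.
  move=> a a0; rewrite /wt -[r in RHS]card_ord -cardsT; apply: eq_card => j.
  by rewrite !inE !mxE mulr1 a0.
split.
  by apply/eqP; rewrite eqn_leq rank_leq_row lt0n mxrank_eq0 nz.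
split.
  move=> v /sub_rVP [a ->]; case: (eqVneq a 0) => [-> | a0]; first by rewrite scale0r eqxx.
  by move=> _; rewrite wt1.
exists (const_mx 1); first exact: submx_refl.
by split => //; rewrite -[const_mx 1]scale1r wt1 ?oner_eq0.
Qed.

Lemma Pu_constr (K : finFieldType) (E0 : fieldExtType K) r d h (Xm : 'M[K]_(r, d)) :
  (d <= \dim {:E0})%N ->
  (forall y : 'rV[K]_r, (wt y <= h.+1)%N -> y *m Xm = 0 -> y = 0) ->
  forall y : 'rV[K]_r, (wt y <= h.+1)%N ->
  \sum_j in_alg E0 (y 0 j) * (\sum_(b < d) Xm j b *: (vbasis {:E0})`_b) = 0 -> y = 0.
Proof.
move=> dd PX y wy e; apply: PX => //.
pose F (i : nat) := oapp (fun b : 'I_d => (y *m Xm) 0 b) 0 (insub i) *: (vbasis {:E0})`_i.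
have e2 : \sum_(b < d) F b = 0.
  apply: (etrans _ e); under [RHS]eq_bigr => j _ do rewrite mulr_algl scaler_sumr.
  rewrite [RHS]exchange_big; apply: eq_bigr => b _; rewrite /F valK /= mxE scaler_suml.
  by apply: eq_bigr => j _; rewrite scalerA.
have e3 : \sum_(i < \dim {:E0}) F i = 0.
  apply: (etrans _ e2); rewrite [RHS](big_ord_widen _ F dd) [RHS]big_mkcond; apply: eq_bigr => i _.
  case: ltnP => // di; rewrite /F insubN ?scale0r //.
  by rewrite -leqNgt.
have /freeP H := basis_free (vbasisP {:E0}).
apply/rowP => b; have := H (fun i => oapp (fun b : 'I_d => (y *m Xm) 0 b) 0 (insub (val i))) e3 (widen_ord dd b).
by rewrite /= valK /= => ->; rewrite mxE.
Qed.

Lemma frob_ext (K : finFieldType) (E0 : fieldExtType K) (L : fieldExtType (FinFieldExtType E0)) :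
  forall x y : L, (x + y) ^+ #|K| = x ^+ #|K| + y ^+ #|K|.
Proof.
move=> x y.
have [p _ pcharKp] := finPcharP K; rewrite (card_pprimeChar pcharKp).
have pE : p \in [pchar E0] by rewrite pchar_lalg.
have pF : p \in [pchar FinFieldExtType E0] by [].
have pL : p \in [pchar L] by rewrite pchar_lalg.
elim: (logn _ _) => [|k IH]; first by rewrite !expr1.
by rewrite expnSr !exprM IH -!(pFrobenius_autE pL) rmorphD.
Qed.

Local Close Scope ring_scope.
Unset Implicit Arguments.

Theorem lemma3p8 (r h g m n q : nat) :
  (2 <= r)%N -> (2 <= h)%N -> (0 < g)%N -> (0 < m)%N ->
  (g + h < g * r)%N -> n = (r * g)%N ->
  prime_power q ->
  ((m * n) %/ r <= q ^ m)%N ->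
  ((r <= m)%N \/
   ((m < r)%N /\
    exists (K : finFieldType) (C : 'M[K]_r),
      #|K| = q /\ \rank C = (r - m)%N /\ min_dist_ge C (h + 2))) ->
  exists_MR_LRC (q ^ minn (h * m) ((n * m) %/ r)) n r h 1.
Proof.
move=> r2 h2 g0 m0 ghr nE qpp mq Hcase.
have r0 : (0 < r)%N by apply: leq_trans r2.
have h0 : (0 < h)%N by apply: leq_trans h2.
have gm : ((m * n) %/ r = m * g)%N by rewrite nE mulnCA mulKn.
have expE : (minn (h * m) ((n * m) %/ r) = m * minn h g)%N.
  by rewrite [(n * m)%N]mulnC gm minnMr [(h * m)%N]mulnC.
have [K [d [Xm [cardK [dm PX]]]]] : exists (K : finFieldType) (d : nat) (Xm : 'M[K]_(r, d)),
    #|K| = q /\ (d <= m)%N /\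
    (forall y : 'rV[K]_r, (wt y <= h.+1)%N -> (y *m Xm = 0)%R -> y = 0%R).
  case: Hcase => [rm | [mr [K [C [cK [rC dC]]]]]].
  - case: qpp => p [k [pp k0 ->]]; have [Fm _ cF] := pPrimePowerField pp k0.
    by exists Fm, r, (1%:M)%R; split => //; split => // y _; rewrite mulmx1.
  - exists K, (\rank (cokermx C)), (col_base (cokermx C)); split => //; split.
      by rewrite mxrank_coker rC; lia.
    move=> y wy e; have yC : (y <= C)%MS by rewrite submxE -(mulmx_base (cokermx C)) mulmxA e mul0mx.
    apply/eqP; apply: contraTT wy => ynz; have := dC y yC ynz.
    by rewrite -ltnNge addn2.
have [E0 dimE0] := ext_exists K m0.
pose E := FinFieldExtType E0.
have cardEq : #|E| = (q ^ m)%N by rewrite card_ext dimE0 cardK.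
have s0 : (0 < minn h g)%N by rewrite leq_min h0 g0.
have [L dimL] := ext_exists E s0.
exists (FinFieldExtType L); split.
  by rewrite card_ext dimL cardEq -expnM expE.
exists g; split; first by rewrite nE mulnC.
pose iota := (in_alg E0 : {rmorphism K -> E}).
pose u := fun j : 'I_r => (\sum_(b < d) Xm j b *: (vbasis {:E0})`_b)%R.
have Pu : forall y : 'rV[K]_r, (wt y <= h.+1)%N -> (\sum_j iota (y 0 j) * u j = 0)%R -> y = 0%R.
  by apply: Pu_constr => //; rewrite dimE0.
have gE : (g <= #|E|)%N.
  rewrite cardEq; apply: leq_trans mq; rewrite gm; exact: leq_pmull.
pose gam := fun i : 'I_g => nth 0%R (enum E) i.
have gam_inj : injective gam.
  move=> i j e; apply/val_inj; apply/eqP.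
  have sE : size (enum E) = #|E| by rewrite cardE.
  rewrite -(nth_uniq 0%R _ _ (enum_uniq E)) ?sE; first by apply/eqP.
    exact: leq_trans (ltn_ord i) gE.
  exact: leq_trans (ltn_ord j) gE.
pose X := vbasis {:L}.
have freeX : free X := basis_free (vbasisP {:L}).
have hs : (minn h g <= \dim {:L})%N by rewrite dimL.
pose beta := betaC X u gam.
exists (Amat L r), (Dmat K h beta).
split.
- by split => //.
- by rewrite muln1.
- by move=> i; apply: gen_code_ones.
move=> S cS grpS.
apply: (@MR_rank L K (in_alg L \o iota)) => //.
- exact: frob_ext.
- exact: finNzRing_gt1.
move=> y yS ysum yb; exact: (KLC freeX gam_inj hs Pu cS grpS yS ysum yb).
Qed.
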